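(* Let $p_0=2,p_1=3,p_2=5,\dots$ be the primes in increasing order. For every $n\ge1$, $$msr_n(SP_1)\;\ge\;p_{n-1}\qquad\text{and}\qquad msr_{n+1}(SP_0)\;\ge\;2\,p_{n-1},$$ where $msr_n(SP_1)$ is the maximum series without units of $n$-fillings formed by grids with modules $p_1,\dots,p_n$, and $msr_{n+1}(SP_0)$ is the maximum series without units of $(n+1)$-fillings formed by grids with modules $p_0,\dots,p_n$.
   Context: A grid $S(a)$ of module $a\ge1$ with shift $k$ is the sequence $(l_j)_{j\in\mathbb Z}$ with $l_j=0$ iff $j\equiv k\pmod a$, else $l_j=1$. Products of grids are elementwise logical ANDs; an $n$-filling with modules $a_1,\dots,a_n$ is such a product (arbitrary shifts) in which omitting any grid changes the product. $SP_1$ is the system of grids with modules $3,5,7,11,\dots$ (all odd primes) and $SP_0$ the system with modules $2,3,5,7,\dots$ (all primes). A $0$-series is a segment between positions $i<k$ with $l_i=l_k=1$ and no ones strictly between; its length is $k-i$. The maximum series is the supremum over all shifts of the largest length of a $0$-series. *)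

(* Defs.v *)
From mathcomp Require Import all_boot all_order all_algebra.
Set Implicit Arguments. Unset Strict Implicit. Unset Printing Implicit Defensive.
Import Order.TTheory GRing.Theory Num.Theory.
Local Open Scope ring_scope.

Definition next_prime (m : nat) : nat :=
  ex_minn (let: exist2 p H1 H2 := prime_above m in
           ex_intro (fun q => (m < q)%N && prime q) p (introT andP (conj H1 H2))).

Fixpoint nthp (i : nat) : nat :=
  match i with 0 => 2%N | i'.+1 => next_prime (nthp i') end.

(* Grid S(a) with shift k: l_j = 0 (false) iff j = k mod a, else 1 (true). *)
Definition grid (a : nat) (k : int) (j : int) : bool :=
  ~~ (j == k %[mod a%:Z])%Z.

Definition grid_prod (I : finType) (a : I -> nat) (k : I -> int)
  (P : pred I) (j : int) : bool :=
  [forall i in P, grid (a i) (k i) j].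

Definition is_filling (I : finType) (a : I -> nat) (k : I -> int) : Prop :=
  forall i : I, exists j : int,
    grid_prod a k predT j != grid_prod a k (predC1 i) j.

Definition zero_series (l : int -> bool) (i k : int) : Prop :=
  [/\ i < k, l i, l k & forall j : int, i < j -> j < k -> ~~ l j].

(* "The maximum series (sup over all shifts making the product a filling with
   modules a, of the largest length of a 0-series) is at least c":
   unfolded, some admissible choice of shifts has a 0-series of length >= c. *)
Definition msr_ge (I : finType) (a : I -> nat) (c : nat) : Prop :=
  exists k : I -> int, is_filling a k /\
    exists i j : int, zero_series (grid_prod a k predT) i j /\ c%:Z <= j - i.

(* Main.v *)
Require Import Defs.
From mathcomp Require Import all_boot all_order all_algebra zify ring.
Import Order.TTheory GRing.Theory Num.Theory.
Set Implicit Arguments. Unset Strict Implicit.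

Lemma next_primeP m : [/\ (m < next_prime m)%N, prime (next_prime m) &
  forall q, (m < q)%N -> prime q -> (next_prime m <= q)%N].
Proof.
rewrite /next_prime. case: ex_minnP => p /andP[h1 h2] hmin.
split=> // q h1q h2q. by apply: hmin; rewrite h1q h2q.
Qed.

Lemma nthp_prime i : prime (nthp i).
Proof. by case: i => [|i] //=; case: (next_primeP (nthp i)). Qed.

Lemma nthp_ltS i : (nthp i < nthp i.+1)%N.
Proof. by rewrite /=; case: (next_primeP (nthp i)). Qed.

Lemma nthp_lt i j : (i < j)%N -> (nthp i < nthp j)%N.
Proof.
elim: j => [|j IH] //. rewrite ltnS leq_eqVlt => /orP[/eqP->|h]; first exact: nthp_ltS.
exact: ltn_trans (IH h) (nthp_ltS j).
Qed.

Lemma nthp_ge i : (i.+2 <= nthp i)%N.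
Proof. elim: i => [|i IH] //=. have := nthp_ltS i. simpl. lia. Qed.

Lemma nthp_all p : prime p -> exists t, nthp t = p.
Proof.
move=> pp.
suff H : forall k, (p <= nthp k)%N -> exists t, nthp t = p.
  apply: (H p). have := nthp_ge p. lia.
elim=> [|k IH] hk.
  exists 0%N. have := prime_gt1 pp. simpl in hk. simpl. lia.
case: (leqP p (nthp k)) => h; first exact: IH.
exists k.+1. apply/eqP; rewrite eqn_leq hk andbT.
by case: (next_primeP (nthp k)) => _ _ /(_ p h pp).
Qed.

Lemma nthp1 : nthp 1 = 3%N.
Proof.
rewrite /=. case: (next_primeP 2) => h1 _ /(_ 3%N isT isT) h2. lia.
Qed.

Lemma nthp_odd i : (0 < i)%N -> odd (nthp i).
Proof.
move=> hi. have := nthp_lt hi. rewrite /= => h.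
case: (even_prime (nthp_prime i)) => // e. by rewrite e in h.
Qed.
Local Open Scope ring_scope.

Definition qf (i : nat) : nat := nthp i.+1.
Definition rr (m i : nat) : int := if (i < m)%N then 0 else if i == m then 1 else -1.
Definition cb (m i : nat) (v : int) : bool := ((qf i)%:Z %| v - rr m i)%Z.
Definition covb m v := [exists i : 'I_m.+2, cb m i v].

Lemma oddE n : odd n -> exists b, n = (2 * b + 1)%N.
Proof. move=> h; exists n./2. have := odd_double_half n. rewrite h. lia. Qed.

Lemma dvdz_ex (q : nat) (x : int) : (q%:Z %| x)%Z -> exists c : int, x = c * q%:Z.
Proof. by move/dvdzP. Qed.

Lemma nthp_le i j : (i <= j)%N -> (nthp i <= nthp j)%N.
Proof. rewrite leq_eqVlt => /orP[/eqP->//|h]. have := nthp_lt h; lia. Qed.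

Lemma nthp_inj i j : nthp i = nthp j -> i = j.
Proof.
move=> e; case: (ltngtP i j) => // h; have := nthp_lt h; rewrite e; lia.
Qed.

Lemma nthp_gt2 i : (0 < i)%N -> (3 <= nthp i)%N.
Proof. move=> h. have := nthp_le h. by rewrite nthp1. Qed.

Lemma rr_lt m i : (i < m)%N -> rr m i = 0.
Proof. by rewrite /rr => ->. Qed.
Lemma rr_m m : rr m m = 1.
Proof. by rewrite /rr ltnn eqxx. Qed.
Lemma rr_mS m : rr m m.+1 = -1.
Proof. rewrite /rr ltnNge leqnSn /=. by have ->: (m.+1 == m) = false by lia. Qed.

Lemma nodivz (q : nat) (x y c : int) : y = x + c * q%:Z -> (0 < `|x| < q)%N ->
  ~~ (q%:Z %| y)%Z.
Proof.
move=> -> /andP[h1 h2]; apply/negP => /dvdz_ex [f hf].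
have : x = (f - c) * q%:Z by rewrite mulrBl -hf; ring.
move/(congr1 (fun z : int => `|z|%N)). rewrite abszM absz_nat => e.
rewrite e in h1 h2. move: h1 h2; case: (`|f - c|%N) => [|a]; rewrite ?mul0n //; nia.
Qed.

Lemma ord3 m (i : 'I_m.+2) : [\/ (i < m)%N, val i = m | val i = m.+1].
Proof. case: i => i /= hi. have : (i < m)%N \/ i = m \/ i = m.+1 by lia. case=> [|[]] h; [exact: Or31 | exact: Or32 | exact: Or33]. Qed.

Section Core.
Variable m : nat.
Let P := nthp m.+1.

Lemma L_a (c : int) : 0 < c -> c < P%:Z -> covb m (2 * c - P%:Z).
Proof.
move=> c0 cP.
have [b hb] := oddE (nthp_odd (ltn0Sn m)). rewrite -/P in hb.
set v := 2 * c - P%:Z.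
have [v1|v1] := eqVneq v 1.
  apply/existsP; exists (@Ordinal m.+2 m (leqnSn _)).
  by rewrite /cb rr_m v1 subrr dvdz0.
have [vm1|vm1] := eqVneq v (-1).
  apply/existsP; exists (@Ordinal m.+2 m.+1 (leqnn _)).
  by rewrite /cb rr_mS vm1 opprK addNr dvdz0.
have h2 : ~~ (2 %| v)%Z by rewrite /v; lia.
have a1 : (1 < `|v|)%N by move: v1 vm1 h2; rewrite /v; lia.
have aP : (`|v| <= P - 2)%N by rewrite /v; lia.
set a := `|v|%N in a1 aP.
have pp := pdiv_prime a1.
have pd := pdiv_dvd a.
have pa : (pdiv a <= a)%N by apply: dvdn_leq; lia.
have p2 : pdiv a != 2%N.
  apply/eqP=> e; move: h2; rewrite dvdzE; have : (2 %| a)%N by rewrite -e. by rewrite /a => ->.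
have [t ht] := nthp_all pp.
have t0 : (0 < t)%N by case: t ht => [|t] //= e; rewrite -e eqxx in p2.
have tm : (t < m.+1)%N.
  rewrite ltnNge; apply/negP => h; have := nthp_le h; rewrite ht -/P; lia.
apply/existsP; exists (@Ordinal m.+2 t.-1 ltac:(lia)).
rewrite /cb /= rr_lt; last lia.
rewrite subr0 dvdzE /qf prednK // ht /= -/a //.
Qed.

Lemma qf_small i : (i < m)%N -> [/\ prime (qf i), (3 <= qf i)%N & (qf i < P)%N].
Proof.
move=> h; split; first exact: nthp_prime.
  exact: nthp_gt2.
by apply: nthp_lt; lia.
Qed.

Lemma Pfacts : [/\ (3 <= P)%N, odd P, (P < qf m.+1)%N & odd (qf m.+1)].
Proof.
split; [exact: nthp_gt2 | exact: nthp_odd | exact: nthp_ltS | exact: nthp_odd].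
Qed.

Lemma qf_m : qf m = P. Proof. by []. Qed.

Lemma L_d : ~~ covb m 2.
Proof.
have [h3 oP hpn opn] := Pfacts.
apply/existsP => -[i Hi]; move: Hi; case: (ord3 i) => hi; rewrite /cb.
- rewrite rr_lt // subr0. have [_ q3 _] := qf_small hi.
  by apply/negP; apply: (nodivz (x := 2) (c := 0)); [rewrite mul0r addr0 | lia].
- rewrite hi rr_m qf_m.
  by apply/negP; apply: (nodivz (x := 1) (c := 0)); [rewrite mul0r addr0 | lia].
- rewrite hi rr_mS.
  by apply/negP; apply: (nodivz (x := 3) (c := 0)); [rewrite mul0r addr0 | lia].
Qed.

Lemma noPdiv i s : (i < m)%N -> ~~ ((qf i)%:Z %| s * P%:Z)%Z -> False.
Abort.

Lemma L_b (s : int) : (s == 1) || (s == -1) -> ~~ covb m (s * P%:Z).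
Proof.
have [h3 oP hpn opn] := Pfacts.
have [b hb] := oddE oP. have [e he] := oddE opn.
move=> hs.
apply/existsP => -[i Hi]; move: Hi; case: (ord3 i) => hi; rewrite /cb.
- rewrite rr_lt // subr0 dvdzE abszM !absz_nat.
  have [pq q3 qP] := qf_small hi.
  have -> : `|s|%N = 1%N by case/orP: hs => /eqP ->.
  rewrite mul1n dvdn_prime2 //; last exact: nthp_prime.
  move/eqP => e'; rewrite e' in qP; lia.
- rewrite hi rr_m qf_m.
  case/orP: hs => /eqP ->.
    by apply/negP; apply: (nodivz (x := -1) (c := 1)); [ring | lia].
  by apply/negP; apply: (nodivz (x := -1) (c := -1)); [ring | lia].
- rewrite hi rr_mS.
  case/orP: hs => /eqP ->.
    apply/negP; apply: (nodivz (x := (P.+1)%:Z) (c := 0)); [rewrite mul0r addr0 mul1r opprK; lia | ].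
    rewrite absz_nat; rewrite /qf in he hpn *; lia.
  apply/negP; apply: (nodivz (x := - (P.-1)%:Z) (c := 0)); [rewrite mul0r addr0 opprK; lia | ].
  rewrite abszN absz_nat; lia.
Qed.

Lemma L_c (i : 'I_m.+2) : exists c : int, (cb m i (2 * c - P%:Z)) /\
  (forall i' : 'I_m.+2, i' != i -> ~~ cb m i' (2 * c - P%:Z)).
Proof.
have [h3 oP hpn opn] := Pfacts.
have [b hb] := oddE oP. have [e he] := oddE opn.
case: (ord3 i) => hi.
- have [pq q3 qP] := qf_small hi.
  have [d hd] := oddE (nthp_odd (ltn0Sn i)).
  exists (d + b + 1)%:Z.
  have ev : 2 * (d + b + 1)%:Z - P%:Z = (qf i)%:Z by rewrite /qf hd hb; lia.
  rewrite ev; split; first by rewrite /cb rr_lt // subr0 dvdzz.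
  move=> i' ne; case: (ord3 i') => hi'; rewrite /cb.
  + rewrite rr_lt // subr0 dvdzE !absz_nat dvdn_prime2 //; last exact: nthp_prime.
    apply/negP => /eqP /nthp_inj [] e'. by case/negP: ne; apply/eqP; apply: val_inj.
  + rewrite hi' rr_m qf_m.
    by apply: (nodivz (x := (qf i).-1%:Z) (c := 0)); [rewrite mul0r addr0; lia | rewrite absz_nat; lia].
  + rewrite hi' rr_mS opprK.
    by apply: (nodivz (x := (qf i).+1%:Z) (c := 0)); [rewrite mul0r addr0; lia | rewrite absz_nat; lia].
- exists (b + 1)%:Z.
  have ev : 2 * (b + 1)%:Z - P%:Z = 1 by rewrite hb; lia.
  rewrite ev; split; first by rewrite /cb hi rr_m subrr dvdz0.
  move=> i' ne; case: (ord3 i') => hi'; rewrite /cb.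
  + have [pq q3 qP] := qf_small hi'.
    rewrite rr_lt // subr0.
    by apply: (nodivz (x := 1) (c := 0)); [rewrite mul0r addr0 | lia].
  + by case/negP: ne; apply/eqP; apply: val_inj; rewrite /= hi hi'.
  + rewrite hi' rr_mS opprK.
    by apply: (nodivz (x := 2) (c := 0)); [rewrite mul0r addr0 | lia].
- exists b%:Z.
  have ev : 2 * b%:Z - P%:Z = -1 by rewrite hb; lia.
  rewrite ev; split; first by rewrite /cb hi rr_mS opprK addNr dvdz0.
  move=> i' ne; case: (ord3 i') => hi'; rewrite /cb.
  + have [pq q3 qP] := qf_small hi'.
    rewrite rr_lt // subr0.
    by apply: (nodivz (x := -1) (c := 0)); [rewrite mul0r addr0 | lia].
  + rewrite hi' rr_m qf_m.
    by apply: (nodivz (x := -2) (c := 0)); [rewrite mul0r addr0 | lia].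
  + by case/negP: ne; apply/eqP; apply: val_inj; rewrite /= hi hi'.
Qed.
End Core.

Lemma gpT (I : finType) (a : I -> nat) k j :
  (forall i, grid (a i) (k i) j) -> grid_prod a k predT j.
Proof. by move=> h; apply/forallP => i; apply/implyP => _. Qed.

Lemma gpF (I : finType) (a : I -> nat) k j i :
  ~~ grid (a i) (k i) j -> ~~ grid_prod a k predT j.
Proof. by move=> h; apply/negP => /forallP /(_ i) /implyP /(_ isT); apply/negP. Qed.

Lemma fill_wit (I : finType) (a : I -> nat) k j i :
  ~~ grid (a i) (k i) j -> (forall i', i' != i -> grid (a i') (k i') j) ->
  grid_prod a k predT j != grid_prod a k (predC1 i) j.
Proof.
move=> h1 h2. rewrite (negbTE (gpF h1)).
have -> : grid_prod a k (predC1 i) j.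
  by apply/forallP => i'; apply/implyP => /= ne; apply: h2.
by [].
Qed.

Lemma covb_neg m v : ~~ covb m v -> forall i', (i' < m.+2)%N -> ~~ cb m i' v.
Proof.
move=> h i' hi; apply/negP => c; move/negP: h; apply; apply/existsP.
by exists (Ordinal hi).
Qed.

Lemma covb_pos m v : covb m v -> exists2 i', (i' < m.+2)%N & cb m i' v.
Proof. by case/existsP => -[i hi] c; exists i. Qed.

Lemma modz_dvd (q : nat) (j k : int) : (j == k %[mod q%:Z])%Z = (q%:Z %| j - k)%Z.
Proof. exact: eqz_mod_dvd. Qed.

Section Main.
Variable m : nat.
Let P := nthp m.+1.

Definition k1 (i : 'I_m.+2) : int := (P%:Z + rr m i) * ((qf i).+1./2)%:Z.

Lemma grid1 (i : 'I_m.+2) (j : int) :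
  grid (nthp i.+1) (k1 i) j = ~~ cb m i (2 * j - P%:Z).
Proof.
rewrite /grid /cb /k1 modz_dvd -/(qf i); congr negb.
have [d hd] := oddE (nthp_odd (ltn0Sn i)). rewrite -/(qf i) in hd.
have hh : ((qf i).+1./2)%:Z = d%:Z + 1 by rewrite hd; lia.
rewrite hh hd. set r := rr m i.
apply/idP/idP => /dvdzP [f hf]; apply/dvdzP.
  exists (2 * f + P%:Z + r). have E : j = f * (2 * d + 1)%N%:Z + (P%:Z + r) * (d%:Z + 1) by lia.
  rewrite E PoszD PoszM. ring.
exists ((d%:Z + 1) * f - j).
have E2 : (d%:Z + 1) * (2 * j - P%:Z - r) = (d%:Z + 1) * (f * (2 * d + 1)%N%:Z) by rewrite hf.
move: E2; rewrite PoszD PoszM. lia.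
Qed.

Lemma part1 : msr_ge (fun i : 'I_m.+2 => nthp i.+1) (nthp m.+1).
Proof.
have [h3 oP hpn opn] := Pfacts m.
exists k1; split.
  move=> i. have [c [hc hne]] := L_c i. exists c.
  apply: fill_wit; first by rewrite grid1 hc.
  by move=> i' ne; rewrite grid1 hne.
exists 0, P%:Z; split; last by rewrite subr0.
split.
- rewrite -/P; lia.
- apply: gpT => i; rewrite grid1.
  have := @L_b m (-1) isT. rewrite mulN1r => /covb_neg /(_ i (ltn_ord i)).
  by rewrite mulr0 sub0r.
- apply: gpT => i; rewrite grid1.
  have := @L_b m 1 isT. rewrite mul1r => /covb_neg /(_ i (ltn_ord i)).
  move=> hh; suff -> : 2 * P%:Z - P%:Z = (nthp m.+1)%:Z by []. rewrite /P; ring.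
- move=> j j0 jP. have /covb_pos [i hi hc] := @L_a m j j0 jP.
  apply: (gpF (i := Ordinal hi)). by rewrite grid1 negbK.
Qed.

Definition K2 (i : 'I_m.+3) : int :=
  match val i with 0 => 1 | i'.+1 => P%:Z + rr m i' end.

Lemma grid2 (i : 'I_m.+3) (J : int) : grid (nthp i) (K2 i) J =
  match val i with 0 => ~~ (2 %| J - 1)%Z | i'.+1 => ~~ cb m i' (J - P%:Z) end.
Proof.
case: i => [[|i'] hi] /=; rewrite /grid /K2 modz_dvd //= /cb /qf.
by rewrite opprD addrA.
Qed.

Lemma part2 : msr_ge (fun i : 'I_m.+3 => nthp i) (2 * nthp m.+1).
Proof.
have [h3 oP hpn opn] := Pfacts m.
have [b hb] := oddE oP.
exists K2; split.
  case=> [[|i'] hi].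
    exists (P%:Z + 2). apply: fill_wit.
      by rewrite grid2 /= negbK /P hb; lia.
    case=> [[|i2] h2] ne; first by rewrite -(inj_eq val_inj) /= in ne.
    rewrite grid2 /=.
    have := covb_neg (L_d m) (h2 : (i2 < m.+2)%N). 
    by have -> : P%:Z + 2 - P%:Z = 2 by ring.
  have hi' : (i' < m.+2)%N by [].
  have [c [hc hne]] := L_c (Ordinal hi').
  exists (2 * c). apply: fill_wit; first by rewrite grid2 /= negbK.
  case=> [[|i2] h2] ne; rewrite grid2 /=.
    lia.
  have h2' : (i2 < m.+2)%N by [].
  have := hne (Ordinal h2'). rewrite /=. apply.
  apply/negP => /eqP [] e; move: ne; rewrite -(inj_eq val_inj) /= e eqxx //.
exists 0, (2 * P%:Z); split; last by rewrite subr0 PoszM.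
split.
- rewrite /P; lia.
- apply: gpT => -[[|i'] hi]; rewrite grid2 /=; first by lia.
  have := covb_neg (@L_b m (-1) isT) (hi : (i' < m.+2)%N). rewrite mulN1r.
  by rewrite sub0r.
- apply: gpT => -[[|i'] hi]; rewrite grid2 /=; first by rewrite /P hb; lia.
  have := covb_neg (@L_b m 1 isT) (hi : (i' < m.+2)%N). rewrite mul1r.
  by have -> : 2 * P%:Z - P%:Z = (nthp m.+1)%:Z by rewrite /P; ring.
- move=> J J0 JP.
  have [h|h] := boolP (2 %| J - 1)%Z.
    apply: (gpF (i := ord0)). by rewrite grid2 /= negbK.
  have : (2 %| J)%Z by lia.
  case/dvdzP => c hc.
  have c0 : 0 < c by lia.
  have cP : c < P%:Z by lia.
  have /covb_pos [i hi hcb] := @L_a m c c0 cP.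
  have hi2 : (i.+1 < m.+3)%N by [].
  apply: (gpF (i := Ordinal hi2)). rewrite grid2 /= negbK hc.
  by rewrite mulrC.
Qed.
End Main.

Lemma base1 : msr_ge (fun i : 'I_1 => nthp i.+1) (nthp 0).
Proof.
have gE : forall (i : 'I_1) (j : int), grid (nthp i.+1) 0 j = ~~ (3 %| j)%Z.
  by move=> i j; rewrite (ord1 i) (_ : nthp _ = 3%N) ?nthp1 // /grid modz_dvd subr0.
exists (fun _ => 0); split.
  move=> i; exists 0; apply: fill_wit; first by rewrite gE.
  by move=> i'; rewrite (ord1 i) (ord1 i') eqxx.
exists (-1), 1; split; last by [].
split => //.
- by apply: gpT => i; rewrite gE.
- by apply: gpT => i; rewrite gE.
- move=> j h1 h2; have -> : j = 0 by lia.
  by apply: (gpF (i := ord0)); rewrite gE.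
Qed.

Lemma base2 : msr_ge (fun i : 'I_2 => nthp i) (2 * nthp 0).
Proof.
pose K (i : 'I_2) : int := if val i == 0%N then 1 else 0.
have gE : forall (i : 'I_2) (j : int), grid (nthp i) (K i) j =
   if val i == 0%N then ~~ (2 %| j - 1)%Z else ~~ (3 %| j)%Z.
  move=> [[|[|i]] hi] j //; rewrite /grid /K /= modz_dvd //.
  by rewrite (_ : next_prime 2 = 3%N) ?subr0 //; exact: nthp1.
exists K; split.
  move=> [[|[|i]] hi] //.
    exists 1; apply: fill_wit; first by rewrite gE.
    by move=> i' ne; rewrite gE; move: i' ne => [[|[|i']] hi'] //=.
  exists 0; apply: fill_wit; first by rewrite gE.
  by move=> i' ne; rewrite gE; move: i' ne => [[|[|i']] hi'] //=.
exists (-2), 2; split; last by [].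
split => //.
- by apply: gpT => i; rewrite gE; case: (_ == _); lia.
- by apply: gpT => i; rewrite gE; case: (_ == _); lia.
- move=> j h1 h2.
  have : j = -1 \/ j = 0 \/ j = 1 by lia.
  case=> [->|[->|->]].
  + by apply: (gpF (i := ord0)); rewrite gE.
  + by apply: (gpF (i := ord_max)); rewrite gE.
  + by apply: (gpF (i := ord0)); rewrite gE.
Qed.

Close Scope ring_scope.
Theorem theorem13 (n : nat) (hn : (1 <= n)%N) :
  msr_ge (fun i : 'I_n => nthp i.+1) (nthp n.-1) /\
  msr_ge (fun i : 'I_n.+1 => nthp i) (2 * nthp n.-1).
Proof.
case: n hn => [|[|m]] // _.
  by split; [exact: base1 | exact: base2].
by split; [exact: part1 | exact: part2].
Qed.
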